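(* With the notation below, if $\Xi_{ijk}>0$, then the three lengths $l_{ij},l_{jk},l_{ki}$ satisfy the strict triangle inequalities, and the orthogonal circle of the resulting hyperbolic triangle is compact. In particular, for a triangulation $\mathcal T$, the set $\Xi(\mathcal T)$ of $(\mathbf I,\mathbf r)\in\mathbb R^{E(\mathcal T)}_{>1}\times\mathbb R^V_{>0}$ with $\Xi_{ijk}>0$ for every face $f_{ijk}$ is contained in $Q_h(\mathcal T)$.
   Context: For a face $f_{ijk}$ with radii $r_i,r_j,r_k>0$ at its vertices and inversive distances $a=I_{jk},b=I_{ki},c=I_{ij}>1$ on its edges, set $p=\cosh r_i,q=\cosh r_j,r=\cosh r_k$, $x=\cosh l_{jk}=qr+a\sinh r_j\sinh r_k$, $y=\cosh l_{ki}=rp+b\sinh r_k\sinh r_i$, $z=\cosh l_{ij}=pq+c\sinh r_i\sinh r_j$, and $$\Xi_{ijk}=p^2(1-x^2)+q^2(1-y^2)+r^2(1-z^2)+2pq(xy-z)+2pr(xz-y)+2qr(yz-x).$$ Orthogonal circle: embed the triangle isometrically in the Poincaré disk $\mathbb D\subset\mathbb R^2$; the hyperbolic vertex circles are Euclidean circles, and the orthogonal circle is the unique Euclidean circle orthogonal to all three; it is compact if it lies in the open disk $\mathbb D$. $Q_h(\mathcal T)$ is the set of $(\mathbf I,\mathbf r)$ whose lengths $l_{ij}=\operatorname{arccosh}(\cosh r_i\cosh r_j+I_{ij}\sinh r_i\sinh r_j)$ satisfy strict triangle inequalities on every face of the triangulation $\mathcal T$ (a $\Delta$-complex triangulation of a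 marked closed surface $(S,V)$). *)

(* Defs.v *)
From Stdlib Require Import Reals.
Open Scope R_scope.

Definition acosh (x : R) : R := ln (x + sqrt (x * x - 1)).

Definition edge_len (ri rj I : R) : R :=
  acosh (cosh ri * cosh rj + I * sinh ri * sinh rj).

(* Xi_{ijk}, with a = I_jk, b = I_ki, c = I_ij *)
Definition Xi (ri rj rk a b c : R) : R :=
  let p := cosh ri in let q := cosh rj in let r := cosh rk in
  let x := q * r + a * sinh rj * sinh rk in
  let y := r * p + b * sinh rk * sinh ri in
  let z := p * q + c * sinh ri * sinh rj in
  p^2 * (1 - x^2) + q^2 * (1 - y^2) + r^2 * (1 - z^2)
  + 2 * p * q * (x * y - z) + 2 * p * r * (x * z - y) + 2 * q * r * (y * z - x).

Definition strict_triangle (x y z : R) : Prop :=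
  x < y + z /\ y < z + x /\ z < x + y.

Definition pt := (R * R)%type.
Definition norm2 (z : pt) : R := fst z ^ 2 + snd z ^ 2.
Definition dist2 (z w : pt) : R := (fst z - fst w) ^ 2 + (snd z - snd w) ^ 2.
Definition in_disk (z : pt) : Prop := norm2 z < 1.

Definition dH (z w : pt) : R :=
  acosh (1 + 2 * dist2 z w / ((1 - norm2 z) * (1 - norm2 w))).

Definition euclid_circle_of (P : pt) (r : R) (e : pt) (s : R) : Prop :=
  0 < s /\ forall z : pt, (in_disk z /\ dH z P = r) <-> dist2 z e = s ^ 2.

Definition euclid_orthogonal (o : pt) (rho : R) (e : pt) (s : R) : Prop :=
  dist2 o e = rho ^ 2 + s ^ 2.

Definition orth_circle (Pi Pj Pk : pt) (ri rj rk : R) (o : pt) (rho : R) : Prop :=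
  0 < rho /\
  forall (e : pt) (s : R),
    (euclid_circle_of Pi ri e s \/ euclid_circle_of Pj rj e s
     \/ euclid_circle_of Pk rk e s) ->
    euclid_orthogonal o rho e s.

(* a Euclidean circle is compact if it lies in the open unit disk *)
Definition compact_circle (o : pt) (rho : R) : Prop :=
  sqrt (norm2 o) + rho < 1.

(* Combinatorial face data of a (Delta-complex) triangulation: each face f
   has vertices v1 f, v2 f, v3 f (= i, j, k) and edges e1 f, e2 f, e3 f
   (= e_jk, e_ki, e_ij), the edge e_n being opposite to vertex v_n. *)
Record triangulation := {
  TV : Type; TE : Type; TF : Type;
  v1 : TF -> TV; v2 : TF -> TV; v3 : TF -> TV;
  e1 : TF -> TE; e2 : TF -> TE; e3 : TF -> TE }.

Definition domain_ok (T : triangulation) (I : TE T -> R) (r : TV T -> R) : Prop :=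
  (forall e, 1 < I e) /\ (forall v, 0 < r v).

Definition Q_h (T : triangulation) (I : TE T -> R) (r : TV T -> R) : Prop :=
  domain_ok T I r /\
  forall f : TF T,
    strict_triangle
      (edge_len (r (v1 T f)) (r (v2 T f)) (I (e3 T f)))
      (edge_len (r (v2 T f)) (r (v3 T f)) (I (e1 T f)))
      (edge_len (r (v3 T f)) (r (v1 T f)) (I (e2 T f))).

Definition Xi_set (T : triangulation) (I : TE T -> R) (r : TV T -> R) : Prop :=
  domain_ok T I r /\
  forall f : TF T,
    0 < Xi (r (v1 T f)) (r (v2 T f)) (r (v3 T f)) (I (e1 T f)) (I (e2 T f)) (I (e3 T f)).

(* Main.v *)
Require Import Defs.
From Stdlib Require Import Reals Lra Psatz.
Open Scope R_scope.

Lemma cosh_E t : cosh t = (exp t + / exp t)/2.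
Proof. unfold cosh; rewrite exp_Ropp; reflexivity. Qed.
Lemma sinh_E t : sinh t = (exp t - / exp t)/2.
Proof. unfold sinh; rewrite exp_Ropp; reflexivity. Qed.

Lemma ch_sh t : cosh t ^ 2 = 1 + sinh t ^ 2.
Proof. rewrite cosh_E, sinh_E. assert (exp t <> 0) by (apply Rgt_not_eq, exp_pos). field; auto. Qed.

Lemma cosh_pos t : 0 < cosh t.
Proof. rewrite cosh_E. assert (0 < exp t) by apply exp_pos.
 assert (0 < / exp t) by (apply Rinv_0_lt_compat; auto). lra. Qed.

Lemma sinh_pos t : 0 < t -> 0 < sinh t.
Proof. intro. rewrite <- sinh_0. apply sinh_lt; auto. Qed.
Lemma sinh_nneg t : 0 <= t -> 0 <= sinh t.
Proof. intro H. destruct H. left; apply sinh_pos; auto. subst; rewrite sinh_0; lra. Qed.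

Lemma cosh_gt1 t : 0 < t -> 1 < cosh t.
Proof. intro. pose proof (ch_sh t). pose proof (sinh_pos t H). pose proof (cosh_pos t). nra. Qed.

Lemma acosh_cosh t : 0 <= t -> acosh (cosh t) = t.
Proof. intro H. unfold acosh.
 replace (cosh t * cosh t - 1) with (sinh t * sinh t) by (pose proof (ch_sh t); nra).
 rewrite sqrt_square by (apply sinh_nneg; auto).
 replace (cosh t + sinh t) with (exp t) by (rewrite cosh_E, sinh_E; field; apply Rgt_not_eq, exp_pos).
 apply ln_exp. Qed.

Lemma acosh_aux u : 1 <= u -> let w := sqrt (u*u-1) in
  0 <= w /\ w * w = u*u - 1 /\ 0 < u + w /\ / (u + w) = u - w.
Proof. intros H w. assert (0 <= u*u-1) by nra.
 assert (0 <= w) by apply sqrt_pos. assert (w*w = u*u-1) by (apply sqrt_sqrt; auto).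
 repeat split; auto. lra. field_simplify_eq. nra. lra. Qed.

Lemma cosh_acosh u : 1 <= u -> cosh (acosh u) = u.
Proof. intro H. destruct (acosh_aux u H) as (H1&H2&H3&H4). unfold acosh.
 rewrite cosh_E, exp_ln by auto. rewrite H4. lra. Qed.

Lemma sinh_acosh u : 1 <= u -> sinh (acosh u) = sqrt (u*u-1).
Proof. intro H. destruct (acosh_aux u H) as (H1&H2&H3&H4). unfold acosh.
 rewrite sinh_E, exp_ln by auto. rewrite H4. lra. Qed.

Lemma acosh_nneg u : 1 <= u -> 0 <= acosh u.
Proof. intro H. destruct (Rle_or_lt 0 (acosh u)) as [|H0]; auto.
 apply sinh_lt in H0. rewrite sinh_0, sinh_acosh in H0 by auto.
 pose proof (sqrt_pos (u*u-1)). lra. Qed.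

Lemma acosh_lt u v : 1 <= u -> u < v -> acosh u < acosh v.
Proof. intros H H'. unfold acosh.
 destruct (acosh_aux u H) as (H1&H2&H3&H4).
 apply ln_increasing; auto.
 assert (sqrt (u*u-1) <= sqrt (v*v-1)) by (apply sqrt_le_1_alt; nra). lra. Qed.

Lemma acosh_inj u v : 1 <= u -> 1 <= v -> acosh u = acosh v -> u = v.
Proof. intros Hu Hv E. destruct (Rtotal_order u v) as [h|[h|h]]; auto.
 apply acosh_lt in h; auto; lra. apply acosh_lt in h; auto; lra. Qed.

Lemma cosh_plus' s t : cosh (s + t) = cosh s * cosh t + sinh s * sinh t.
Proof. rewrite !cosh_E, !sinh_E, exp_plus.
 assert (exp s <> 0) by (apply Rgt_not_eq, exp_pos).
 assert (exp t <> 0) by (apply Rgt_not_eq, exp_pos). field; auto. Qed.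

Lemma acosh_tri u v w : 1 <= u -> 1 <= v -> 1 <= w ->
  0 < (1 - v^2) * (1 - w^2) - (u - v*w)^2 -> acosh u < acosh v + acosh w.
Proof. intros Hu Hv Hw D.
 pose proof (acosh_nneg v Hv). pose proof (acosh_nneg w Hw).
 rewrite <- (acosh_cosh (acosh v + acosh w)) by lra.
 apply acosh_lt; auto.
 rewrite cosh_plus', !cosh_acosh, !sinh_acosh by auto.
 rewrite <- sqrt_mult; try nra.
 set (S := sqrt ((v*v-1)*(w*w-1))).
 assert (0 <= S) by apply sqrt_pos.
 assert (S*S = (v*v-1)*(w*w-1)) by (unfold S; apply sqrt_sqrt; apply Rmult_le_pos; nra).
 nra. Qed.
Definition DA (x y z : R) := 1 + 2*x*y*z - x^2 - y^2 - z^2.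
Lemma DA_Xi ri rj rk a b c :
  DA (cosh rj * cosh rk + a * sinh rj * sinh rk)
     (cosh rk * cosh ri + b * sinh rk * sinh ri)
     (cosh ri * cosh rj + c * sinh ri * sinh rj) - Xi ri rj rk a b c
  = (sinh ri * sinh rj * sinh rk)^2 * (a^2+b^2+c^2+2*a*b*c-1).
Proof. unfold DA, Xi. rewrite !cosh_E, !sinh_E.
 assert (exp ri <> 0) by (apply Rgt_not_eq, exp_pos).
 assert (exp rj <> 0) by (apply Rgt_not_eq, exp_pos).
 assert (exp rk <> 0) by (apply Rgt_not_eq, exp_pos).
 field; auto. Qed.
Definition XiE (p q r x y z : R) :=
  p^2 * (1 - x^2) + q^2 * (1 - y^2) + r^2 * (1 - z^2)
  + 2 * p * q * (x * y - z) + 2 * p * r * (x * z - y) + 2 * q * r * (y * z - x).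
Definition Lf (a0 a1 a2 b0 b1 b2 : R) := -a0*b0 + a1*b1 + a2*b2.
Definition det3 m11 m12 m13 m21 m22 m23 m31 m32 m33 :=
  m11*(m22*m33 - m23*m32) - m12*(m21*m33 - m23*m31) + m13*(m21*m32 - m22*m31).

Lemma lin3 m11 m12 m13 m21 m22 m23 m31 m32 m33 v1 v2 v3 :
  det3 m11 m12 m13 m21 m22 m23 m31 m32 m33 <> 0 ->
  m11*v1 + m12*v2 + m13*v3 = 0 -> m21*v1 + m22*v2 + m23*v3 = 0 ->
  m31*v1 + m32*v2 + m33*v3 = 0 -> v1 = 0 /\ v2 = 0 /\ v3 = 0.
Proof. intros D E1 E2 E3. set (d := det3 m11 m12 m13 m21 m22 m23 m31 m32 m33) in *.
 assert (d * v1 = (m22*m33 - m23*m32)*(m11*v1 + m12*v2 + m13*v3)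
   - (m12*m33 - m13*m32)*(m21*v1 + m22*v2 + m23*v3)
   + (m12*m23 - m13*m22)*(m31*v1 + m32*v2 + m33*v3)) by (unfold d, det3; ring).
 assert (d * v2 = - (m21*m33 - m23*m31)*(m11*v1 + m12*v2 + m13*v3)
   + (m11*m33 - m13*m31)*(m21*v1 + m22*v2 + m23*v3)
   - (m11*m23 - m13*m21)*(m31*v1 + m32*v2 + m33*v3)) by (unfold d, det3; ring).
 assert (d * v3 = (m21*m32 - m22*m31)*(m11*v1 + m12*v2 + m13*v3)
   - (m11*m32 - m12*m31)*(m21*v1 + m22*v2 + m23*v3)
   + (m11*m22 - m12*m21)*(m31*v1 + m32*v2 + m33*v3)) by (unfold d, det3; ring).
 rewrite E1, E2, E3 in *.
 repeat split; apply (Rmult_eq_reg_l d); auto; lra. Qed.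

Lemma uniq3 a0 a1 a2 b0 b1 b2 c0 c1 c2 x y z V0 V1 V2 :
  Lf a0 a1 a2 a0 a1 a2 = -1 -> Lf b0 b1 b2 b0 b1 b2 = -1 -> Lf c0 c1 c2 c0 c1 c2 = -1 ->
  Lf a0 a1 a2 b0 b1 b2 = -z -> Lf b0 b1 b2 c0 c1 c2 = -x -> Lf c0 c1 c2 a0 a1 a2 = -y ->
  DA x y z <> 0 ->
  Lf V0 V1 V2 a0 a1 a2 = 0 -> Lf V0 V1 V2 b0 b1 b2 = 0 -> Lf V0 V1 V2 c0 c1 c2 = 0 ->
  V0 = 0 /\ V1 = 0 /\ V2 = 0.
Proof. intros Ha Hb Hc Hab Hbc Hca D Ea Eb Ec.
 apply (lin3 (-a0) a1 a2 (-b0) b1 b2 (-c0) c1 c2).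
 - intro H0.
   assert ((det3 (-a0) a1 a2 (-b0) b1 b2 (-c0) c1 c2)^2 =
     - det3 (Lf a0 a1 a2 a0 a1 a2) (Lf a0 a1 a2 b0 b1 b2) (Lf a0 a1 a2 c0 c1 c2)
            (Lf b0 b1 b2 a0 a1 a2) (Lf b0 b1 b2 b0 b1 b2) (Lf b0 b1 b2 c0 c1 c2)
            (Lf c0 c1 c2 a0 a1 a2) (Lf c0 c1 c2 b0 b1 b2) (Lf c0 c1 c2 c0 c1 c2))
     by (unfold det3, Lf; ring).
   assert (Lf a0 a1 a2 c0 c1 c2 = -y) by (rewrite <- Hca; unfold Lf; ring).
   assert (Lf b0 b1 b2 a0 a1 a2 = -z) by (rewrite <- Hab; unfold Lf; ring).
   assert (Lf c0 c1 c2 b0 b1 b2 = -x) by (rewrite <- Hbc; unfold Lf; ring).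
   rewrite H0, Ha, Hb, Hc, Hab, Hbc, Hca, H1, H2, H3 in H. apply D. unfold DA. unfold det3 in H. nra.
 - unfold Lf in Ea; lra.
 - unfold Lf in Eb; lra.
 - unfold Lf in Ec; lra.
Qed.

Lemma core a0 a1 a2 b0 b1 b2 c0 c1 c2 p q r x y z :
  Lf a0 a1 a2 a0 a1 a2 = -1 -> 0 < a0 ->
  Lf a0 a1 a2 b0 b1 b2 = -z -> Lf b0 b1 b2 c0 c1 c2 = -x -> Lf c0 c1 c2 a0 a1 a2 = -y ->
  Lf b0 b1 b2 b0 b1 b2 = -1 -> Lf c0 c1 c2 c0 c1 c2 = -1 ->
  0 < p -> 0 < XiE p q r x y z -> XiE p q r x y z < DA x y z ->
  exists M0 M1 M2, Lf M0 M1 M2 a0 a1 a2 = p /\ Lf M0 M1 M2 b0 b1 b2 = q /\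
    Lf M0 M1 M2 c0 c1 c2 = r /\ -1 < Lf M0 M1 M2 M0 M1 M2 /\
    Lf M0 M1 M2 M0 M1 M2 < 0 /\ M0 < 0.
Proof. intros Ha Ha0 Hab Hbc Hca Hb Hc Hp X1 X2.
 set (D := DA x y z) in *. assert (HD : D <> 0) by lra.
 set (al := -((1-x^2)*p + (x*y-z)*q + (x*z-y)*r)/D).
 set (be := -((x*y-z)*p + (1-y^2)*q + (y*z-x)*r)/D).
 set (ga := -((x*z-y)*p + (y*z-x)*q + (1-z^2)*r)/D).
 set (M0 := al*a0 + be*b0 + ga*c0).
 set (M1 := al*a1 + be*b1 + ga*c1).
 set (M2 := al*a2 + be*b2 + ga*c2).
 assert (Lab : Lf b0 b1 b2 a0 a1 a2 = -z) by (rewrite <- Hab; unfold Lf; ring).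
 assert (Lbc : Lf c0 c1 c2 b0 b1 b2 = -x) by (rewrite <- Hbc; unfold Lf; ring).
 assert (Lca : Lf a0 a1 a2 c0 c1 c2 = -y) by (rewrite <- Hca; unfold Lf; ring).
 assert (Ea : Lf M0 M1 M2 a0 a1 a2 = p).
 { replace (Lf M0 M1 M2 a0 a1 a2) with (al * Lf a0 a1 a2 a0 a1 a2 + be * Lf b0 b1 b2 a0 a1 a2
     + ga * Lf c0 c1 c2 a0 a1 a2) by (unfold M0, M1, M2, Lf; ring).
   rewrite Ha, Lab, Hca. unfold al, be, ga, D, DA in *. field; auto. }
 assert (Eb : Lf M0 M1 M2 b0 b1 b2 = q).
 { replace (Lf M0 M1 M2 b0 b1 b2) with (al * Lf a0 a1 a2 b0 b1 b2 + be * Lf b0 b1 b2 b0 b1 b2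
     + ga * Lf c0 c1 c2 b0 b1 b2) by (unfold M0, M1, M2, Lf; ring).
   rewrite Hab, Hb, Lbc. unfold al, be, ga, D, DA in *. field; auto. }
 assert (Ec : Lf M0 M1 M2 c0 c1 c2 = r).
 { replace (Lf M0 M1 M2 c0 c1 c2) with (al * Lf a0 a1 a2 c0 c1 c2 + be * Lf b0 b1 b2 c0 c1 c2
     + ga * Lf c0 c1 c2 c0 c1 c2) by (unfold M0, M1, M2, Lf; ring).
   rewrite Lca, Hbc, Hc. unfold al, be, ga, D, DA in *. field; auto. }
 assert (EM : Lf M0 M1 M2 M0 M1 M2 = - XiE p q r x y z / D).
 { replace (Lf M0 M1 M2 M0 M1 M2) with (al * Lf M0 M1 M2 a0 a1 a2 + be * Lf M0 M1 M2 b0 b1 b2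
     + ga * Lf M0 M1 M2 c0 c1 c2) by (unfold M0, M1, M2, Lf; ring).
   rewrite Ea, Eb, Ec. unfold al, be, ga, D, DA, XiE in *. field; auto. }
 assert (HDp : 0 < D) by lra.
 assert (LM1 : -1 < Lf M0 M1 M2 M0 M1 M2).
 { rewrite EM. apply Rmult_lt_reg_r with D; auto. unfold Rdiv. rewrite Rmult_assoc, Rinv_l by auto. lra. }
 assert (LM2 : Lf M0 M1 M2 M0 M1 M2 < 0).
 { rewrite EM. unfold Rdiv. assert (0 < /D) by (apply Rinv_0_lt_compat; auto). nra. }
 exists M0, M1, M2. repeat split; auto.
 clearbody M0 M1 M2. unfold Lf in *.
 destruct (Rlt_or_le M0 0) as [|HM]; auto. exfalso.
 assert (Hs : M1*a1 + M2*a2 > M0*a0) by lra.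
 assert (0 <= (M1*a2-M2*a1)^2) by apply pow2_ge_0.
 assert (HC : (M1*a1+M2*a2)^2 <= (M1^2+M2^2)*(a1^2+a2^2)) by nra.
 assert (0 <= M0*a0) by nra.
 assert (M1^2+M2^2 <= M0^2) by nra.
 assert (a1^2+a2^2 <= a0^2) by nra.
 assert ((M1^2+M2^2)*(a1^2+a2^2) <= M0^2*a0^2) by (apply Rmult_le_compat; nra).
 nra.
Qed.
Definition hp0 (P : pt) := (1 + norm2 P)/(1 - norm2 P).
Definition hp1 (P : pt) := 2 * fst P/(1 - norm2 P).
Definition hp2 (P : pt) := 2 * snd P/(1 - norm2 P).

Lemma norm2_nn P : 0 <= norm2 P.
Proof. unfold norm2. pose proof (pow2_ge_0 (fst P)). pose proof (pow2_ge_0 (snd P)). lra. Qed.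
Lemma dist2_nn P Q : 0 <= dist2 P Q.
Proof. unfold dist2. pose proof (pow2_ge_0 (fst P - fst Q)). pose proof (pow2_ge_0 (snd P - snd Q)). lra. Qed.

Lemma hp_on P : in_disk P -> Lf (hp0 P) (hp1 P) (hp2 P) (hp0 P) (hp1 P) (hp2 P) = -1 /\ 0 < hp0 P.
Proof. unfold in_disk; intro H. pose proof (norm2_nn P). split.
 unfold Lf, hp0, hp1, hp2, norm2 in *. field. lra.
 unfold hp0. apply Rdiv_lt_0_compat; lra. Qed.

Lemma dH_arg P Q : in_disk P -> in_disk Q ->
  1 + 2 * dist2 P Q / ((1 - norm2 P) * (1 - norm2 Q)) = - Lf (hp0 P) (hp1 P) (hp2 P) (hp0 Q) (hp1 Q) (hp2 Q)
  /\ 1 <= 1 + 2 * dist2 P Q / ((1 - norm2 P) * (1 - norm2 Q)).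
Proof. unfold in_disk; intros H1 H2. split.
 unfold Lf, hp0, hp1, hp2, dist2, norm2 in *. field. lra.
 pose proof (dist2_nn P Q). assert (0 < (1 - norm2 P) * (1 - norm2 Q)) by (apply Rmult_lt_0_compat; lra).
 assert (0 <= 2 * dist2 P Q / ((1 - norm2 P) * (1 - norm2 Q))) by (unfold Rdiv; apply Rmult_le_pos; [lra| left; apply Rinv_0_lt_compat; lra]). lra. Qed.

Definition kk (P : pt) (r : R) := (cosh r - 1) * (1 - norm2 P) / 2.
Definition e0 (P : pt) (r : R) : pt := (fst P / (1 + kk P r), snd P / (1 + kk P r)).
Definition s0 (P : pt) (r : R) := sqrt (kk P r * (1 - norm2 P + kk P r)) / (1 + kk P r).

Lemma kk_pos P r : in_disk P -> 0 < r -> 0 < kk P r.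
Proof. unfold in_disk, kk; intros. pose proof (cosh_gt1 r H0).
 assert (0 < (cosh r - 1) * (1 - norm2 P)) by (apply Rmult_lt_0_compat; lra). lra. Qed.

Lemma s0_prop P r : in_disk P -> 0 < r -> 0 < s0 P r /\
  s0 P r ^ 2 = kk P r * (1 - norm2 P + kk P r) / (1 + kk P r)^2.
Proof. intros H H0. pose proof (kk_pos P r H H0). unfold in_disk in H.
 assert (0 < kk P r * (1 - norm2 P + kk P r)) by (apply Rmult_lt_0_compat; lra).
 unfold s0. split. apply Rdiv_lt_0_compat. apply sqrt_lt_R0; auto. lra.
 unfold Rdiv. rewrite Rpow_mult_distr. rewrite <- (sqrt_sqrt (kk P r * (1 - norm2 P + kk P r))) at 2 by lra.
 rewrite pow_inv. ring. Qed.

Lemma circ_eq P r z : in_disk P -> 0 < r ->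
  (dist2 z (e0 P r) = s0 P r ^ 2 <-> dist2 z P = kk P r * (1 - norm2 z)).
Proof. intros H H0. destruct (s0_prop P r H H0) as [_ Hs]. pose proof (kk_pos P r H H0).
 assert (E : dist2 z (e0 P r) - s0 P r ^ 2 = (dist2 z P - kk P r * (1 - norm2 z)) / (1 + kk P r)).
 { rewrite Hs. unfold dist2, e0, norm2. simpl. field. lra. }
 split; intro E2.
 - rewrite E2 in E. replace (s0 P r ^ 2 - s0 P r ^ 2) with 0 in E by ring.
   unfold Rdiv in E. symmetry in E. apply Rmult_integral in E. destruct E as [E|E]; [lra|].
   exfalso. assert (0 < / (1 + kk P r)) by (apply Rinv_0_lt_compat; lra). lra.
 - rewrite E2 in E. replace (kk P r * (1 - norm2 z) - kk P r * (1 - norm2 z)) with 0 in E by ring.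
   unfold Rdiv in E. rewrite Rmult_0_l in E. lra. Qed.

Lemma circ_explicit P r : in_disk P -> 0 < r -> euclid_circle_of P r (e0 P r) (s0 P r).
Proof. intros H H0. destruct (s0_prop P r H H0) as [Hs0 _]. split; auto.
 intro z. rewrite circ_eq by auto. pose proof (kk_pos P r H H0).
 assert (HP := H). unfold in_disk in HP.
 split.
 - intros [Hz Hd]. unfold dH in Hd. destruct (dH_arg z P Hz H) as [_ Hge].
   apply (f_equal cosh) in Hd. rewrite cosh_acosh in Hd by auto.
   unfold in_disk in Hz. unfold kk. rewrite <- Hd. field. lra.
 - intro E. assert (Hz : in_disk z).
   { unfold in_disk. destruct (Rlt_or_le (norm2 z) 1) as [|Hn]; auto. exfalso.
     pose proof (dist2_nn z P).
     assert (dist2 z P = 0) by nra.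
     unfold dist2 in H3. pose proof (pow2_ge_0 (fst z - fst P)). pose proof (pow2_ge_0 (snd z - snd P)).
     assert ((fst z - fst P)^2 = 0) by lra. assert ((snd z - snd P)^2 = 0) by lra.
     assert (fst z - fst P = 0) by (apply Rsqr_0_uniq; rewrite Rsqr_pow2; lra).
     assert (snd z - snd P = 0) by (apply Rsqr_0_uniq; rewrite Rsqr_pow2; lra).
     assert (norm2 z = norm2 P) by (unfold norm2; replace (fst z) with (fst P) by lra; replace (snd z) with (snd P) by lra; ring).
     lra. }
   split; auto. unfold dH. rewrite E.
   replace (1 + 2 * (kk P r * (1 - norm2 z)) / ((1 - norm2 z) * (1 - norm2 P))) with (cosh r).
   apply acosh_cosh; lra.
   unfold kk. unfold in_disk in Hz. field. lra. Qed.

Lemma circles_eq e s e' s' : 0 < s -> 0 < s' ->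
  (forall z, dist2 z e = s ^ 2 <-> dist2 z e' = s' ^ 2) -> e = e' /\ s = s'.
Proof. intros Hs Hs' H. destruct e as [ex ey]. destruct e' as [fx fy].
 assert (H1 := proj2 (H (fx + s', fy)) ltac:(unfold dist2; simpl; ring)).
 assert (H2 := proj2 (H (fx - s', fy)) ltac:(unfold dist2; simpl; ring)).
 assert (H3 := proj2 (H (fx, fy + s')) ltac:(unfold dist2; simpl; ring)).
 assert (H4 := proj2 (H (fx, fy - s')) ltac:(unfold dist2; simpl; ring)).
 unfold dist2 in *; simpl in *.
 assert (ex = fx) by nra. assert (ey = fy) by nra. subst.
 split; auto. nra. Qed.

Lemma orth_equiv P r o rho : in_disk P -> 0 < r ->
  (euclid_orthogonal o rho (e0 P r) (s0 P r) <->
   Lf (1 + (norm2 o - rho^2)) (2 * fst o) (2 * snd o) (hp0 P) (hp1 P) (hp2 P)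
   = (norm2 o - rho^2 - 1) * cosh r).
Proof. intros H H0. destruct (s0_prop P r H H0) as [_ Hs]. pose proof (kk_pos P r H H0).
 unfold in_disk in H.
 assert (E : dist2 o (e0 P r) - (rho^2 + s0 P r ^ 2) = - (1 - norm2 P) / (2 * (1 + kk P r)) *
   (Lf (1 + (norm2 o - rho^2)) (2 * fst o) (2 * snd o) (hp0 P) (hp1 P) (hp2 P)
   - (norm2 o - rho^2 - 1) * cosh r)).
 { assert (HN : 1 - norm2 P <> 0) by lra.
   assert (HK : 2 + (cosh r - 1) * (1 - norm2 P) <> 0) by (unfold kk in H1; lra).
   rewrite Hs. unfold e0, kk, Lf, hp0, hp1, hp2 in *. unfold dist2, norm2 in *. simpl.
   field; split; intro Hc; [apply HN | apply HK]; rewrite <- Hc; ring. }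
 assert (- (1 - norm2 P) / (2 * (1 + kk P r)) <> 0).
 { apply Rlt_not_eq. unfold Rdiv. apply Rmult_neg_pos. lra. apply Rinv_0_lt_compat; lra. }
 unfold euclid_orthogonal. split; intro E2.
 - rewrite E2 in E. replace (rho ^ 2 + s0 P r ^ 2 - (rho ^ 2 + s0 P r ^ 2)) with 0 in E by ring.
   symmetry in E. apply Rmult_integral in E. destruct E; [contradiction|lra].
 - rewrite E2 in E. replace ((norm2 o - rho ^ 2 - 1) * cosh r - (norm2 o - rho ^ 2 - 1) * cosh r) with 0 in E by ring. lra.
Qed.

Lemma part1 ri rj rk a b c :
  0 < ri -> 0 < rj -> 0 < rk -> 1 < a -> 1 < b -> 1 < c ->
  0 < Xi ri rj rk a b c ->
  let x := cosh rj * cosh rk + a * sinh rj * sinh rk in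
  let y := cosh rk * cosh ri + b * sinh rk * sinh ri in
  let z := cosh ri * cosh rj + c * sinh ri * sinh rj in
  1 < x /\ 1 < y /\ 1 < z /\ Xi ri rj rk a b c < DA x y z /\
  strict_triangle (acosh z) (acosh x) (acosh y).
Proof. intros Hi Hj Hk Ha Hb Hc HX x y z.
 pose proof (cosh_gt1 _ Hi). pose proof (cosh_gt1 _ Hj). pose proof (cosh_gt1 _ Hk).
 pose proof (sinh_pos _ Hi). pose proof (sinh_pos _ Hj). pose proof (sinh_pos _ Hk).
 assert (Px : 1 < x).
 { unfold x. assert (1 < cosh rj * cosh rk) by nra.
   assert (0 < a * sinh rj * sinh rk) by (apply Rmult_lt_0_compat; [apply Rmult_lt_0_compat|]; lra). lra. }
 assert (Py : 1 < y).
 { unfold y. assert (1 < cosh rk * cosh ri) by nra.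
   assert (0 < b * sinh rk * sinh ri) by (apply Rmult_lt_0_compat; [apply Rmult_lt_0_compat|]; lra). lra. }
 assert (Pz : 1 < z).
 { unfold z. assert (1 < cosh ri * cosh rj) by nra.
   assert (0 < c * sinh ri * sinh rj) by (apply Rmult_lt_0_compat; [apply Rmult_lt_0_compat|]; lra). lra. }
 assert (HD : Xi ri rj rk a b c < DA x y z).
 { pose proof (DA_Xi ri rj rk a b c) as E. fold x y z in E.
   assert (0 < sinh ri * sinh rj * sinh rk) by (apply Rmult_lt_0_compat; [apply Rmult_lt_0_compat|]; lra).
   assert (0 < (sinh ri * sinh rj * sinh rk)^2) by (apply pow_lt; auto).
   assert (0 < a^2+b^2+c^2+2*a*b*c-1).
   { assert (1 < a^2) by nra. assert (0 < b^2) by nra. assert (0 < c^2) by nra.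
     assert (0 < a*b) by nra. assert (0 < a*b*c) by nra. lra. }
   assert (0 < (sinh ri * sinh rj * sinh rk)^2 * (a^2+b^2+c^2+2*a*b*c-1)) by (apply Rmult_lt_0_compat; auto).
   lra. }
 repeat split; auto.
 - apply acosh_tri; try lra. replace ((1 - x ^ 2) * (1 - y ^ 2) - (z - x * y) ^ 2) with (DA x y z) by (unfold DA; ring). lra.
 - apply acosh_tri; try lra. replace ((1 - y ^ 2) * (1 - z ^ 2) - (x - y * z) ^ 2) with (DA x y z) by (unfold DA; ring). lra.
 - apply acosh_tri; try lra. replace ((1 - z ^ 2) * (1 - x ^ 2) - (y - z * x) ^ 2) with (DA x y z) by (unfold DA; ring). lra.
Qed.

Lemma circ_uniq P r e s : in_disk P -> 0 < r -> euclid_circle_of P r e s -> e = e0 P r /\ s = s0 P r.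
Proof. intros H H0 [Hs Hi]. destruct (circ_explicit P r H H0) as [Hs0 Hi0].
 apply circles_eq; auto. intro z. split; intro K.
 apply Hi0, Hi, K. apply Hi, Hi0, K. Qed.

Lemma orth_vertex P r o rho : in_disk P -> 0 < r ->
  ((forall e s, euclid_circle_of P r e s -> euclid_orthogonal o rho e s) <->
   Lf (1 + (norm2 o - rho^2)) (2 * fst o) (2 * snd o) (hp0 P) (hp1 P) (hp2 P)
   = (norm2 o - rho^2 - 1) * cosh r).
Proof. intros H H0. split.
 - intro K. apply orth_equiv; auto. apply K, circ_explicit; auto.
 - intros K e s C. destruct (circ_uniq P r e s H H0 C). subst. apply orth_equiv; auto. Qed.

Lemma dist_L P Q w : in_disk P -> in_disk Q -> 1 <= w -> dH P Q = acosh w ->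
  Lf (hp0 P) (hp1 P) (hp2 P) (hp0 Q) (hp1 Q) (hp2 Q) = - w.
Proof. intros H1 H2 Hw E. destruct (dH_arg P Q H1 H2) as [A B]. unfold dH in E.
 apply acosh_inj in E; auto. lra. Qed.

Lemma Lf_lin u0 u1 u2 h M0 M1 M2 X0 X1 X2 :
  Lf (u0 - h*M0) (u1 - h*M1) (u2 - h*M2) X0 X1 X2 = Lf u0 u1 u2 X0 X1 X2 - h * Lf M0 M1 M2 X0 X1 X2.
Proof. unfold Lf; ring. Qed.

Theorem mainTheorem3 :
  (forall ri rj rk a b c : R,
    0 < ri -> 0 < rj -> 0 < rk -> 1 < a -> 1 < b -> 1 < c ->
    0 < Xi ri rj rk a b c ->
    let lij := edge_len ri rj c in
    let ljk := edge_len rj rk a in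
    let lki := edge_len rk ri b in
    strict_triangle lij ljk lki /\
    (forall Pi Pj Pk : pt,
       in_disk Pi -> in_disk Pj -> in_disk Pk ->
       dH Pi Pj = lij -> dH Pj Pk = ljk -> dH Pk Pi = lki ->
       (exists (o : pt) (rho : R), orth_circle Pi Pj Pk ri rj rk o rho) /\
       (forall (o : pt) (rho : R),
          orth_circle Pi Pj Pk ri rj rk o rho -> compact_circle o rho)))
  /\
  (forall (T : triangulation) (I : TE T -> R) (r : TV T -> R),
    Xi_set T I r -> Q_h T I r).
Proof.
 assert (P1 : forall ri rj rk a b c : R,
    0 < ri -> 0 < rj -> 0 < rk -> 1 < a -> 1 < b -> 1 < c ->
    0 < Xi ri rj rk a b c ->
    strict_triangle (edge_len ri rj c) (edge_len rj rk a) (edge_len rk ri b)).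
 { intros. apply part1; auto. }
 split.
 2:{ intros T I r [[HI Hr] HX]. split; [split; auto|]. intro f.
     apply P1; auto. }
 intros ri rj rk a b c Hi Hj Hk Ha Hb Hc HX. cbv zeta.
 destruct (part1 ri rj rk a b c Hi Hj Hk Ha Hb Hc HX) as (Px & Py & Pz & HD & Htri).
 split; [exact Htri|].
 set (x := cosh rj * cosh rk + a * sinh rj * sinh rk) in *.
 set (y := cosh rk * cosh ri + b * sinh rk * sinh ri) in *.
 set (z := cosh ri * cosh rj + c * sinh ri * sinh rj) in *.
 intros Pi Pj Pk Di Dj Dk Eij Ejk Eki.
 unfold edge_len in Eij, Ejk, Eki. fold x y z in Eij, Ejk, Eki.
 apply dist_L in Eij; auto; try lra.
 apply dist_L in Ejk; auto; try lra.
 apply dist_L in Eki; auto; try lra.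
 destruct (hp_on Pi Di) as [Ha1 Ha0].
 destruct (hp_on Pj Dj) as [Hb1 Hb0].
 destruct (hp_on Pk Dk) as [Hc1 Hc0].
 assert (HXE : Xi ri rj rk a b c = XiE (cosh ri) (cosh rj) (cosh rk) x y z) by reflexivity.
 destruct (core (hp0 Pi) (hp1 Pi) (hp2 Pi) (hp0 Pj) (hp1 Pj) (hp2 Pj) (hp0 Pk) (hp1 Pk) (hp2 Pk)
   (cosh ri) (cosh rj) (cosh rk) x y z Ha1 Ha0 Eij Ejk Eki Hb1 Hc1 (cosh_pos ri))
   as (M0 & M1 & M2 & Ei & Ej & Ek & LM1 & LM2 & HM0); try lra.
 assert (HMv : M1^2 + M2^2 < M0^2) by (unfold Lf in LM2; lra).
 split.
 -
   set (hh := 2 / (M0 - 1)).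
   assert (Hh : hh * (M0 - 1) = 2) by (unfold hh; field; lra).
   set (o := (hh/2 * M1, hh/2 * M2)).
   assert (Eq : norm2 o - (hh + 1) = hh^2/4 * (Lf M0 M1 M2 M0 M1 M2 + 1)).
   { unfold o, norm2, Lf, hh. simpl. field. lra. }
   assert (Hpos : 0 < norm2 o - (hh + 1)).
   { rewrite Eq. apply Rmult_lt_0_compat; [|lra].
     assert (hh <> 0) by (intro; rewrite H in Hh; lra).
     assert (0 < hh^2) by nra. lra. }
   set (rho := sqrt (norm2 o - (hh + 1))).
   assert (Hr2 : rho ^ 2 = norm2 o - (hh + 1)) by (unfold rho; rewrite <- Rsqr_pow2; apply Rsqr_sqrt; lra).
   exists o, rho. split. unfold rho; apply sqrt_lt_R0; auto.
   assert (Key : forall P r, in_disk P -> 0 < r -> Lf M0 M1 M2 (hp0 P) (hp1 P) (hp2 P) = cosh r ->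
      forall e s, euclid_circle_of P r e s -> euclid_orthogonal o rho e s).
   { intros P r HP Hr HL. apply orth_vertex; auto. rewrite Hr2.
     replace (Lf (1 + (norm2 o - (norm2 o - (hh + 1)))) (2 * fst o) (2 * snd o) (hp0 P) (hp1 P) (hp2 P))
       with (hh * Lf M0 M1 M2 (hp0 P) (hp1 P) (hp2 P)).
     rewrite HL. ring.
     replace (1 + (norm2 o - (norm2 o - (hh + 1)))) with (hh * M0) by lra.
     unfold o, Lf. simpl. field. }
   intros e s [C|[C|C]]; [apply (Key Pi ri) | apply (Key Pj rj) | apply (Key Pk rk)]; auto.
 -
   intros o rho [Hrho Horth].
   set (t := norm2 o - rho^2).
   assert (Oi : Lf (1 + t) (2 * fst o) (2 * snd o) (hp0 Pi) (hp1 Pi) (hp2 Pi) = (t - 1) * cosh ri)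
     by (apply orth_vertex; auto; intros e s C; apply Horth; auto).
   assert (Oj : Lf (1 + t) (2 * fst o) (2 * snd o) (hp0 Pj) (hp1 Pj) (hp2 Pj) = (t - 1) * cosh rj)
     by (apply orth_vertex; auto; intros e s C; apply Horth; auto).
   assert (Ok : Lf (1 + t) (2 * fst o) (2 * snd o) (hp0 Pk) (hp1 Pk) (hp2 Pk) = (t - 1) * cosh rk)
     by (apply orth_vertex; auto; intros e s C; apply Horth; auto).
   set (hh := t - 1) in *.
   destruct (uniq3 (hp0 Pi) (hp1 Pi) (hp2 Pi) (hp0 Pj) (hp1 Pj) (hp2 Pj) (hp0 Pk) (hp1 Pk) (hp2 Pk) x y z
     (1 + t - hh * M0) (2 * fst o - hh * M1) (2 * snd o - hh * M2) Ha1 Hb1 Hc1 Eij Ejk Eki)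
     as (V0 & V1 & V2); try lra.
   + rewrite Lf_lin, Oi, Ei; ring.
   + rewrite Lf_lin, Oj, Ej; ring.
   + rewrite Lf_lin, Ok, Ek; ring.
   + assert (Hh : hh * (M0 - 1) = 2) by (unfold hh in *; lra).
     assert (hhn : hh < 0).
     { destruct (Rlt_or_le hh 0); auto. assert (hh * (M0 - 1) <= 0) by nra. lra. }
     assert (O1 : fst o = hh/2 * M1) by lra.
     assert (O2 : snd o = hh/2 * M2) by lra.
     assert (Hno : norm2 o = hh^2/4 * (M1^2+M2^2)) by (unfold norm2; rewrite O1, O2; field).
     assert (Hr2 : rho^2 = norm2 o - hh - 1) by (unfold hh, t; ring).
     unfold compact_circle.
     set (so := sqrt (norm2 o)).
     assert (Hso : so * so = norm2 o) by (apply sqrt_sqrt; apply norm2_nn).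
     assert (Hso0 : 0 <= so) by apply sqrt_pos.
     assert (HM : 0 < hh * M0) by nra.
     assert (Hlt : so < hh * M0 / 2).
     { assert (so^2 < (hh * M0/2)^2).
       { replace (so^2) with (so*so) by ring. rewrite Hso, Hno.
         assert (0 < hh^2) by nra. 
         replace ((hh * M0 / 2) ^ 2) with (hh^2/4 * M0^2) by field. nra. }
       nra. }
     assert (hh * M0 = hh + 2) by lra.
     nra.
Qed.
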